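(* A family $\mathcal{X}$ of metric spaces belongs to $\mathfrak{C}_\alpha$ for some ordinal $\alpha$ if and only if it belongs to $\mathfrak{C}_\alpha$ for some countable ordinal $\alpha$; that is, $\bigcup_\alpha\mathfrak{C}_\alpha=\mathfrak{C}_{\omega_1}$.
   Context: A family $\mathcal{U}$ of metric subspaces of a metric space $(X,d)$ is $r$-disjoint if $d(x,y)>r$ whenever $x\in U$, $y\in U'$, $U\neq U'$ in $\mathcal{U}$. For families $\mathcal{X},\mathcal{Y}$ and $R\in\mathbb{R}^{\mathbb{N}}$, $\mathcal{X}\xrightarrow{R}\mathcal{Y}$ means: there is an integer $k$ such that for each $X\in\mathcal{X}$ there are subcollections $\mathcal{U}_1,\dots,\mathcal{U}_k\subseteq\mathcal{Y}$ of subspaces of $X$, each $\mathcal{U}_i$ being $R_i$-disjoint, with $\bigcup_i\mathcal{U}_i$ covering $X$. A family is bounded if the diameters of its members are uniformly bounded. $\mathfrak{C}_0$ is the class of bounded families; for an ordinal $\alpha>0$, $\mathfrak{C}_\alpha$ is the class of families $\mathcal{X}$ such that for every $R\in\mathbb{R}^{\mathbb{N}}$ there exist $\beta<\alpha$ and $\mathcal{Y}\in\mathfrak{C}_\beta$ with $\mathcal{X}\xrightarrow{R}\mathcal{Y}$. $\omega_1$ denotes the first uncountable ordinal. *)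

(* Defs.v *)
From Stdlib Require Import Reals.
Open Scope R_scope.

Definition is_metric (T : Type) (d : T -> T -> R) : Prop :=
  (forall x y, 0 <= d x y) /\
  (forall x y, d x y = 0 <-> x = y) /\
  (forall x y, d x y = d y x) /\
  (forall x y z, d x z <= d x y + d y z).

(* Metric subspaces of the ambient metric space (T,d) are subsets of T
   (with the induced metric); a mfamily is a set of such subspaces. *)
Arguments is_metric {T} d.

Definition subspace (T : Type) := T -> Prop.
Definition mfamily (T : Type) := subspace T -> Prop.

Definition r_disjoint (T : Type) (d : T -> T -> R) (r : R) (U : mfamily T) : Prop :=
  forall A B, U A -> U B -> A <> B -> forall x y, A x -> B y -> r < d x y.
Arguments r_disjoint {T} d r U.

(* X -R-> Y  (R_1,...,R_k of the paper are Rs 0, ..., Rs (k-1)). *)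
Definition arrow (T : Type) (d : T -> T -> R) (Rs : nat -> R)
    (X Y : mfamily T) : Prop :=
  exists k : nat, forall A, X A ->
    exists U : nat -> mfamily T,
      (forall i, (i < k)%nat ->
         (forall B, U i B -> Y B /\ (forall x, B x -> A x)) /\
         r_disjoint d (Rs i) (U i)) /\
      (forall x, A x -> exists i, (i < k)%nat /\ exists B, U i B /\ B x).

Arguments arrow {T} d Rs X Y.

Definition bounded (T : Type) (d : T -> T -> R) (X : mfamily T) : Prop :=
  exists D : R, forall A, X A -> forall x y, A x -> A y -> d x y <= D.
Arguments bounded {T} d X.

(* Ordinals are represented by elements of well-ordered types (O, lt). *)
Definition well_order (O : Type) (lt : O -> O -> Prop) : Prop :=
  well_founded lt /\
  (forall a b c, lt a b -> lt b c -> lt a c) /\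
  (forall a b, lt a b \/ a = b \/ lt b a).
Arguments well_order {O} lt.

Definition countable_ord (O : Type) (lt : O -> O -> Prop) (a : O) : Prop :=
  exists f : O -> nat, forall b c, lt b a -> lt c a -> f b = f c -> b = c.
Arguments countable_ord {O} lt a.

(* inC lt d a X  <->  X belongs to the class C_a (transfinite recursion along
   the well-order lt, presented as an inductive predicate):
   C_0 = bounded families; for a > 0, X in C_a iff for every R there are
   b < a and Y in C_b with X -R-> Y. *)
Inductive inC (T : Type) (d : T -> T -> R) (O : Type) (lt : O -> O -> Prop)
  : O -> mfamily T -> Prop :=
| inC_zero : forall a X, (forall b, ~ lt b a) -> bounded d X -> inC T d O lt a X
| inC_pos : forall a X, (exists b, lt b a) ->
    (forall Rs : nat -> R, exists b Y, lt b a /\ inC T d O lt b Y /\ arrow d Rs X Y) ->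
    inC T d O lt a X.
Arguments inC {T} d {O} lt _ _.

(* Main.v *)
Require Import Defs.
From Stdlib Require Import Reals Lra Lia Cantor Classical ClassicalEpsilon.
Open Scope R_scope.

Lemma irrefl_wf (O : Type) (lt : O -> O -> Prop) : well_founded lt -> forall x, ~ lt x x.
Proof. intros wf x; induction (wf x) as [x _ IH]; intro h; exact (IH x h h). Qed.

Lemma wf_min (O : Type) (lt : O -> O -> Prop) : well_founded lt -> forall P : O -> Prop,
  (exists x, P x) -> exists m, P m /\ forall y, lt y m -> ~ P y.
Proof.
  intros wf P [x Hx]. revert Hx; induction (wf x) as [x _ IH]; intro Hx.
  destruct (classic (exists y, lt y x /\ P y)) as [[y [Hy Py]]|N].
  - apply (IH y Hy Py).
  - exists x; split; auto; intros y Hy Py; apply N; eauto.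
Qed.

Lemma union_count (O : Type) (lt : O -> O -> Prop) (u : nat -> O) (x : O) :
  (forall n, countable_ord lt (u n)) -> (forall y, lt y x -> exists n, lt y (u n)) ->
  countable_ord lt x.
Proof.
  intros H H0.
  pose (ff := fun n => epsilon (inhabits (fun _:O => 0%nat))
     (fun f => forall b c, lt b (u n) -> lt c (u n) -> f b = f c -> b = c)).
  assert (Hff : forall n b c, lt b (u n) -> lt c (u n) -> ff n b = ff n c -> b = c).
  { intro n. exact (epsilon_spec _ _ (H n)). }
  pose (N := fun y => epsilon (inhabits 0%nat) (fun n => lt y (u n))).
  exists (fun y => to_nat (N y, ff (N y) y)).
  intros b c hb hc e. apply to_nat_inj in e. injection e; intros e2 e1.
  assert (Nb : lt b (u (N b))) by exact (epsilon_spec _ _ (H0 b hb)).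
  assert (Nc : lt c (u (N c))) by exact (epsilon_spec _ _ (H0 c hc)).
  rewrite <- e1 in e2, Nc. apply (Hff (N b)); auto.
Qed.

Lemma arrow_mono (T : Type) (d : T -> T -> R) (Rs Rs' : nat -> R) (X Y : mfamily T) (k : nat) :
  (forall A, X A ->
    exists U : nat -> mfamily T,
      (forall i, (i < k)%nat ->
         (forall B, U i B -> Y B /\ (forall x, B x -> A x)) /\
         r_disjoint d (Rs' i) (U i)) /\
      (forall x, A x -> exists i, (i < k)%nat /\ exists B, U i B /\ B x)) ->
  (forall i, (i < k)%nat -> Rs i <= Rs' i) -> arrow d Rs X Y.
Proof.
  intros H H0. exists k; intros A HA; destruct (H A HA) as [U [H1 H2]]; exists U; split; auto.
  intros i hi; destruct (H1 i hi) as [Ha Hb]; split; auto.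
  intros B C hB hC ne x y hx hy; specialize (Hb B C hB hC ne x y hx hy); specialize (H0 i hi); lra.
Qed.

Definition upd (v : nat -> nat) (k n : nat) : nat -> nat :=
  fun i => if Nat.eqb i k then n else v i.

Fixpoint seqv (P : nat -> (nat -> nat) -> Prop) (k : nat) : nat -> nat :=
  match k with
  | O => fun _ => 0%nat
  | S k' => let v := seqv P k' in
            upd v k' (epsilon (inhabits 0%nat) (fun n => P (S k') (upd v k' n)))
  end.

Lemma seqv_stable P i k : (i < k)%nat -> seqv P k i = seqv P (S i) i.
Proof.
  induction k; intro h; [lia|].
  destruct (Nat.eq_dec i k) as [->|ne]; [reflexivity|].
  simpl seqv at 1. unfold upd at 1. destruct (Nat.eqb_spec i k); [lia|].
  apply IHk; lia.
Qed.

Lemma seqv_inv P : P 0%nat (fun _ => 0%nat) ->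
  (forall k v, P k v -> exists n, P (S k) (upd v k n)) -> forall k, P k (seqv P k).
Proof.
  intros H0 Hs k; induction k; [exact H0|].
  simpl. exact (epsilon_spec _ _ (Hs _ _ IHk)).
Qed.

Lemma main_lemma (T : Type) (d : T -> T -> R) (O : Type) (lt : O -> O -> Prop)
  (wo : well_order lt) : forall a X, inC d lt a X ->
  exists b, (lt b a \/ b = a) /\ countable_ord lt b /\ inC d lt b X.
Proof.
  destruct wo as [wf [tr tri]].
  intro a. induction (wf a) as [a _ IH]. intros X HX.
  destruct (classic (countable_ord lt a)) as [Ca|NCa]. { exists a; auto. }
  inversion HX as [a0 X0 Hmin Hb | a0 X0 Hex H]; subst.
  { exfalso; apply NCa; exists (fun _ => 0%nat); intros b c hb; destruct (Hmin b hb). }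
  pose (Good := fun (Rs : nat -> R) e => exists b Y, lt b e /\ inC d lt b Y /\ arrow d Rs X Y).
  destruct (classic (exists e, lt e a /\ countable_ord lt e /\ forall Rs, Good Rs e))
    as [[e [ea [ce Ge]]]|NG].
  { exists e; split; [left; auto| split; auto]. apply inC_pos.
    - destruct (Ge (fun _ => 0)) as [b [Y [h _]]]; eauto.
    - exact Ge. }
  exfalso.
  pose (E := fun e => lt e a /\ countable_ord lt e).
  assert (Bad : forall e, E e -> exists Rs, ~ Good Rs e).
  { intros e [ea ce]. apply NNPP; intro N. apply NG. exists e; repeat split; auto.
    intro Rs. apply NNPP; intro N2; apply N; eauto. }
  pose (Rf := fun e => epsilon (inhabits (fun _:nat => 0)) (fun Rs => ~ Good Rs e)).
  assert (HRf : forall e, E e -> ~ Good (Rf e) e).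
  { intros e Ee. exact (epsilon_spec _ _ (Bad e Ee)). }
  pose (Cof := fun (S : O -> Prop) => forall e, E e -> exists s, E s /\ S s /\ (lt e s \/ e = s)).
  assert (Pig : forall S (Q : nat -> O -> Prop), Cof S ->
            (forall s, E s -> S s -> exists n, Q n s) -> exists n, Cof (fun s => S s /\ Q n s)).
  { intros S Q H0 H1. apply NNPP; intro Nn.
    assert (Hu : forall n, exists u, E u /\ forall s, E s -> S s -> Q n s -> lt s u).
    { intro n. apply NNPP; intro Nu. apply Nn. exists n. intros e Ee. apply NNPP; intro Ns.
      apply Nu. exists e; split; auto. intros s Es Ss Qs.
      destruct (tri s e) as [h|[h|h]]; auto; exfalso; apply Ns; exists s;
        (split; [exact Es|]); (split; [split; auto|]).
      - right; symmetry; auto.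
      - left; auto. }
    pose (u := fun n => epsilon (inhabits a) (fun u => E u /\ forall s, E s -> S s -> Q n s -> lt s u)).
    assert (Hu' : forall n, E (u n) /\ forall s, E s -> S s -> Q n s -> lt s (u n)).
    { intro n. exact (epsilon_spec _ _ (Hu n)). }
    assert (Hv0 : exists v, E v /\ forall n, lt (u n) v \/ u n = v).
    { assert (Mne : exists x, lt x a /\ forall n, lt (u n) x \/ u n = x).
      { apply NNPP; intro Nm. apply NCa. apply (union_count _ lt u a).
        - intro n; apply (proj2 (proj1 (Hu' n))).
        - intros y hy. apply NNPP; intro Ny. apply Nm. exists y; split; auto. intro n.
          destruct (tri (u n) y) as [h|[h|h]]; auto. exfalso; apply Ny; eauto. }
      destruct (wf_min _ lt wf _ Mne) as [v [[va Hv] vmin]].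
      exists v; split; [split; auto|exact Hv].
      apply (union_count _ lt u v).
      - intro n; apply (proj2 (proj1 (Hu' n))).
      - intros y hy. apply NNPP; intro Ny. apply (vmin y hy). split.
        + eapply tr; eauto.
        + intro n. destruct (tri (u n) y) as [h|[h|h]]; auto. exfalso; apply Ny; eauto. }
    destruct Hv0 as [v [Ev Hv]].
    destruct (H0 v Ev) as [s [Es [Ss hvs]]].
    destruct (H1 s Es Ss) as [n Qn].
    assert (sl := proj2 (Hu' n) s Es Ss Qn).
    assert (sv : lt s v) by (destruct (Hv n) as [h|h]; [eapply tr; eauto | rewrite <- h; auto]).
    destruct hvs as [h|h].
    - apply (irrefl_wf _ lt wf s); eapply tr; eauto.
    - subst v. apply (irrefl_wf _ lt wf s); auto. }
  pose (P := fun k (v : nat -> nat) =>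
           Cof (fun e => forall i, (i < k)%nat -> Rf e i <= INR (v i))).
  assert (HP : forall k, P k (seqv P k)).
  { apply seqv_inv.
    - intros e Ee. exists e; split; [exact Ee|]; split; [intros i hi; lia | right; reflexivity].
    - intros k v Hc.
      destruct (Pig _ (fun n s => Rf s k <= INR n) Hc) as [n Hn].
      + intros s _ _. destruct (INR_unbounded (Rf s k)) as [n hn]; exists n; lra.
      + exists n. intros e Ee. destruct (Hn e Ee) as [s [Es [[S1 Q1] hs]]].
        exists s; split; [exact Es|]; split; [|exact hs]. intros i hi; unfold upd.
        destruct (Nat.eqb_spec i k); [subst; auto | apply S1; lia]. }
  pose (Rstar := fun i => INR (seqv P (S i) i)).
  destruct (H Rstar) as [b [Y [ba [HY Harr]]]].
  destruct (IH b ba Y HY) as [c [cb [cc HcY]]].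
  assert (ca : lt c a) by (destruct cb as [h|h]; [eapply tr; eauto| subst; auto]).
  destruct (wf_min _ lt wf (fun x => lt c x) (ex_intro _ a ca)) as [e [ce emin]].
  assert (Ce : countable_ord lt e).
  { destruct cc as [fc Hfc].
    exists (fun y => if excluded_middle_informative (y = c) then 0%nat else S (fc y)).
    assert (yc : forall y, lt y e -> y <> c -> lt y c).
    { intros y hy ne. destruct (tri y c) as [h|[h|h]]; auto; [contradiction|].
      exfalso; exact (emin y hy h). }
    intros y z hy hz.
    destruct (excluded_middle_informative (y = c)); destruct (excluded_middle_informative (z = c));
      intro hh; try congruence.
    injection hh; intro hh'. apply Hfc; auto. }
  assert (ea : lt e a).
  { destruct (tri e a) as [h|[h|h]]; auto.
    - subst; contradiction.
    - exfalso; exact (emin a h ca). }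
  destruct Harr as [k Hk].
  destruct (HP k e (conj ea Ce)) as [s [Es [Ss hes]]].
  apply (HRf s Es). exists c, Y; repeat split; auto.
  - destruct hes as [h|h]; [eapply tr; eauto| subst; auto].
  - apply (arrow_mono _ _ _ Rstar _ _ k Hk).
    intros i hi. unfold Rstar. rewrite <- (seqv_stable P i k hi). apply Ss; auto.
Qed.

Theorem theorem3p5 (T : Type) (d : T -> T -> R) (hd : is_metric d)
    (X : mfamily T) :
  (exists (O : Type) (lt : O -> O -> Prop),
      well_order lt /\ exists a : O, inC d lt a X) <->
  (exists (O : Type) (lt : O -> O -> Prop),
      well_order lt /\ exists a : O, countable_ord lt a /\ inC d lt a X).
Proof.
  split.
  - intros [O [lt [wo [a Ha]]]].
    destruct (main_lemma T d O lt wo a X Ha) as [b [_ [cb Hb]]].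
    exists O, lt; split; auto; exists b; auto.
  - intros [O [lt [wo [a [_ Ha]]]]]. exists O, lt; split; auto; exists a; auto.
Qed.
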